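(* Fix $m\ge1$ and $n\ge0$. For every formula $\phi\in\mathcal{L}^m$ and every label $x$: if $\phi$ is valid (true at every world of every $\mathsf{Ldm}_{n}^{m}$-model), then the sequent $x:\phi$ is derivable in the calculus $\mathsf{Ldm}_{n}^{m}\mathsf{L}$ (which contains no cut rule).
   Context: Language. $Ag=\{1,\dots,m\}$, $Var$ a countable set of propositional variables; formulas of $\mathcal{L}^m$: $\phi ::= p \mid \overline{p} \mid (\phi\wedge\phi) \mid (\phi\vee\phi) \mid \Box\phi \mid \Diamond\phi \mid [i]\phi \mid \langle i\rangle\phi$. Models. An $\mathsf{Ldm}_{n}^{m}$-frame is $(W,\{\mathcal{R}_i\}_{i\in Ag})$ with $W\neq\emptyset$ and: (C1) each $\mathcal{R}_i\subseteq W\times W$ is an equivalence relation; (C2) for all $u_1,\dots,u_m\in W$, $\bigcap_{i\in Ag}\mathcal{R}_i(u_i)\neq\emptyset$, where $\mathcal{R}_i(w)=\{v:(w,v)\in\mathcal{R}_i\}$; (C3) only if $n>0$: for each $i\in Ag$ and all $w_0,\dots,w_n\in W$ there are $0\le k<j\le n$ with $(w_k,w_j)\in\mathcal{R}_i$. A model adds a valuation $V:Var\to\mathcal{P}(W)$. Satisfaction: $w\Vdash p$ iff $w\in V(p)$; $w\Vdash\overline{p}$ iff $w\notin V(p)$; $\wedge,\vee$ as usual; $w\Vdash\Box\phi$ iff $u\Vdash\phi$ for all $u\in W$; $w\Vdash\Diamond\phi$ iff $u\Vdash\phi$ for some $u\in W$; $w\Vdash[i]\phi$ iff $u\Vdash\phi$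 for all $u\in\mathcal{R}_i(w)$; $w\Vdash\langle i\rangle\phi$ iff $u\Vdash\phi$ for some $u\in\mathcal{R}_i(w)$. Labelled sequents $\mathcal{R},\Gamma$: $\mathcal{R}$ a multiset of relational atoms $\mathcal{R}_ixy$, $\Gamma$ a multiset of labelled formulas $x:\phi$. Derivations are finite trees whose leaves are $(\mathsf{id})$ instances. Rules of $\mathsf{Ldm}_{n}^{m}\mathsf{L}$ (premise(s) / conclusion): $(\mathsf{id})$: / $\mathcal{R}, w:p, w:\overline{p},\Gamma$. $(\wedge)$: $\mathcal{R}, w:\phi\wedge\psi, w:\phi,\Gamma$ and $\mathcal{R}, w:\phi\wedge\psi, w:\psi,\Gamma$ / $\mathcal{R}, w:\phi\wedge\psi,\Gamma$. $(\vee)$: $\mathcal{R}, w:\phi\vee\psi, w:\phi, w:\psi,\Gamma$ / $\mathcal{R}, w:\phi\vee\psi,\Gamma$. $(\Box)$: $\mathcal{R}, w:\Box\phi, v:\phi,\Gamma$ / $\mathcal{R}, w:\Box\phi,\Gamma$ ($v$ fresh). $(\Diamond)$: $\mathcal{R}, w:\Diamond\phi, u:\phi,\Gamma$ / $\mathcal{R}, w:\Diamond\phi,\Gamma$. $(\mathsf{IOA})$: $\mathcal{R},\mathcal{R}_1u_1v,\dots,\mathcal{R}_mu_mv,\Gamma$ / $\mathcal{R},\Gamma$ ($v$ fresh). $([i])$: $\mathcal{R},\mathcal{R}_iwv, w:[i]\phi, v:\phi,\Gamma$ / $\mathcal{R}, w:[i]\phi,\Gamma$ ($v$ fresh). $(\mathsf{Pr}_i)$: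 $\mathcal{R}, w:\langle i\rangle\phi, u:\phi,\Gamma$ / $\mathcal{R}, w:\langle i\rangle\phi,\Gamma$, applicable only if $w=u$ or there are labels $w=z_0,\dots,z_k=u$ ($k\ge1$) with $\mathcal{R}_iz_lz_{l+1}\in\mathcal{R}$ or $\mathcal{R}_iz_{l+1}z_l\in\mathcal{R}$ for each $l<k$. $(\mathsf{APC}^i_n)$ (only if $n>0$): premises $\mathcal{R},\mathcal{R}_iw_kw_j,\Gamma$ for all $0\le k\le n-1$, $k+1\le j\le n$ / $\mathcal{R},\Gamma$. ''Fresh'' means not occurring in the conclusion. One copy of $([i])$, $(\mathsf{Pr}_i)$, $(\mathsf{APC}^i_n)$ for each $i\in Ag$. *)

(* Defs.v *)
From Stdlib Require Import List Permutation Relations.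
From mathcomp Require Import all_boot.

Set Implicit Arguments.
Unset Strict Implicit.
Unset Printing Implicit Defensive.

(* Agents are 'I_m (agent i of the paper is the ordinal i-1).
   Propositional variables and labels are natural numbers. *)
Definition var := nat.
Definition label := nat.

Inductive form (m : nat) : Type :=
  | Atom : var -> form m
  | NAtom : var -> form m
  | And : form m -> form m -> form m
  | Or : form m -> form m -> form m
  | Box : form m -> form m
  | Dia : form m -> form m
  | Stit : 'I_m -> form m -> form m
  | DStit : 'I_m -> form m -> form m.

Arguments Atom {m}.
Arguments NAtom {m}.

Record frame (m : nat) := Frame {
  world : Type;
  acc : 'I_m -> world -> world -> Prop
}.
Arguments world {m} _.
Arguments acc {m} _ _ _ _.

Definition is_ldm_frame (m n : nat) (F : frame m) : Prop :=
  (forall i, equivalence (world F) (acc F i)) /\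
  (forall u : 'I_m -> world F, exists w : world F, forall i, acc F i (u i) w) /\
  (0 < n -> forall (i : 'I_m) (ws : nat -> world F),
      exists k j, k < j /\ j <= n /\ acc F i (ws k) (ws j)).

Fixpoint sat (m : nat) (F : frame m) (V : var -> world F -> Prop)
    (w : world F) (phi : form m) : Prop :=
  match phi with
  | Atom p => V p w
  | NAtom p => ~ V p w
  | And a b => sat V w a /\ sat V w b
  | Or a b => sat V w a \/ sat V w b
  | Box a => forall u, sat V u a
  | Dia a => exists u, sat V u a
  | Stit i a => forall u, acc F i w u -> sat V u a
  | DStit i a => exists u, acc F i w u /\ sat V u a
  end.

Definition valid (m n : nat) (phi : form m) : Prop :=
  forall (F : frame m) (V : var -> world F -> Prop),
    is_ldm_frame n F -> forall w : world F, sat V w phi.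

Record ratom (m : nat) := RA { ra_ag : 'I_m; ra_src : label; ra_tgt : label }.
Record lform (m : nat) := LF { lf_lab : label; lf_form : form m }.

Definition labels_R (m : nat) (R : list (ratom m)) : list label :=
  flat_map (fun a => ra_src a :: ra_tgt a :: nil) R.
Definition labels_G (m : nat) (G : list (lform m)) : list label :=
  map (@lf_lab m) G.
Definition fresh (m : nat) (v : label) (R : list (ratom m)) (G : list (lform m)) :=
  ~ In v (labels_R R) /\ ~ In v (labels_G G).

Definition edge_i (m : nat) (R : list (ratom m)) (i : 'I_m) (x y : label) : Prop :=
  In (RA i x y) R \/ In (RA i y x) R.
Definition pr_cond (m : nat) (R : list (ratom m)) (i : 'I_m) (w u : label) : Prop :=
  clos_refl_trans label (edge_i R i) w u.

(* Derivability in Ldm_n^m L.  Sequents are pairs of multisets, represented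
   by lists up to permutation (rule [d_perm]). *)
Inductive derivable (m n : nat) : list (ratom m) -> list (lform m) -> Prop :=
  | d_perm : forall R R' G G',
      derivable n R G -> Permutation R R' -> Permutation G G' ->
      derivable n R' G'
  | d_id : forall R G w p,
      derivable n R (LF w (Atom p) :: LF w (NAtom p) :: G)
  | d_and : forall R G w a b,
      derivable n R (LF w (And a b) :: LF w a :: G) ->
      derivable n R (LF w (And a b) :: LF w b :: G) ->
      derivable n R (LF w (And a b) :: G)
  | d_or : forall R G w a b,
      derivable n R (LF w (Or a b) :: LF w a :: LF w b :: G) ->
      derivable n R (LF w (Or a b) :: G)
  | d_box : forall R G w v a,
      fresh v R (LF w (Box a) :: G) ->
      derivable n R (LF w (Box a) :: LF v a :: G) ->
      derivable n R (LF w (Box a) :: G)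
  | d_dia : forall R G w u a,
      derivable n R (LF w (Dia a) :: LF u a :: G) ->
      derivable n R (LF w (Dia a) :: G)
  | d_ioa : forall R G (us : 'I_m -> label) v,
      fresh v R G ->
      derivable n (map (fun i => RA i (us i) v) (enum 'I_m) ++ R) G ->
      derivable n R G
  | d_stit : forall R G i w v a,
      fresh v R (LF w (Stit i a) :: G) ->
      derivable n (RA i w v :: R) (LF w (Stit i a) :: LF v a :: G) ->
      derivable n R (LF w (Stit i a) :: G)
  | d_pr : forall R G i w u a,
      pr_cond R i w u ->
      derivable n R (LF w (DStit i a) :: LF u a :: G) ->
      derivable n R (LF w (DStit i a) :: G)
  | d_apc : forall R G (i : 'I_m) (ws : nat -> label),
      0 < n ->
      (forall k j, k <= n - 1 -> k + 1 <= j -> j <= n ->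
         derivable n (RA i (ws k) (ws j) :: R) G) ->
      derivable n R G.

(* Main.v *)
Require Import Defs.
From Stdlib Require Import List.
From mathcomp Require Import all_boot.
From Stdlib Require Import Permutation Relations Classical ClassicalEpsilon.
From mathcomp Require Import zify.

Set Implicit Arguments.
Unset Strict Implicit.
Unset Printing Implicit Defensive.

Lemma catE (A : Type) (a b : list A) : cat a b = app a b.
Proof. by elim: a => //= y a ->. Qed.

Lemma in_cat_iff (A : Type) (x : A) a b : In x (cat a b) <-> In x a \/ In x b.
Proof. rewrite catE; split; [apply in_app_or | apply in_or_app]. Qed.

Lemma in_map_seq (A B : Type) (f : A -> B) x l : In x l -> In (f x) (map f l).
Proof. elim: l => //= y l IH [<-|H]; [by left | right; auto]. Qed.

Lemma in_seq_In (T : eqType) (x : T) s : x \in s -> In x s.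
Proof.
  elim: s => //= y s IH; rewrite in_cons => /orP [/eqP ->|H]; [by left | right; auto].
Qed.

Lemma nth_error_cat A (G X : list A) j f :
  nth_error G j = Some f -> nth_error (cat G X) j = Some f.
Proof. elim: G j => [|y G IH] [|j] //=; apply IH. Qed.

Lemma In_iota len a c : a <= c -> c < a + len -> In c (iota a len).
Proof.
  elim: len a => [|len IH] a h1 h2; first by lia.
  simpl. case: (eqVneq a c) => [->|hne]; [left; done | right].
  apply IH; lia.
Qed.

Fixpoint mx (l : list nat) : nat :=
  match l with nil => 0 | y :: l => maxn y (mx l) end.

Lemma mx_ge x l : In x l -> x <= mx l.
Proof.
  elim: l => //= y l IH [<-|H]; first by apply leq_maxl.
  apply: leq_trans (IH H) (leq_maxr _ _).
Qed.

Lemma perm_front A (G : list A) f : In f G ->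
  exists G0, Permutation G (f :: G0) /\
    forall X, Permutation (cat G X) (f :: cat X G0).
Proof.
  move=> H; have [l1 [l2 E]] := in_split _ _ H; subst G.
  exists (app l1 l2); split.
  - apply Permutation_sym, Permutation_middle.
  - move=> X. rewrite !catE -app_assoc /=.
    apply: perm_trans; first by apply Permutation_sym, Permutation_middle.
    apply perm_skip. rewrite app_assoc. apply Permutation_app_comm.
Qed.

Section Completeness.
Variables m n : nat.

Definition state := (list (ratom m) * list (lform m))%type.

Lemma labels_G_iff v (G : list (lform m)) :
  In v (labels_G G) <-> exists f, In f G /\ lf_lab f = v.
Proof.
  elim: G => [|y G IH] /=; first by split => // [[f []]].
  split.
  - move=> [<-|H]; first by exists y; auto.
    have [f [h1 h2]] := proj1 IH H. exists f; auto.
  - move=> [f [[<-|h1] h2]]; first by left.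
    right; apply IH; exists f; auto.
Qed.

Definition fr (R : list (ratom m)) (G : list (lform m)) : label :=
  (mx (labels_R R ++ labels_G G)).+1.

Lemma fr_fresh R G : fresh (fr R G) R G.
Proof.
  split => H.
  - have := @mx_ge _ (labels_R R ++ labels_G G) (proj2 (in_cat_iff _ _ _) (or_introl H)).
    by rewrite /fr ltnn.
  - have := @mx_ge _ (labels_R R ++ labels_G G) (proj2 (in_cat_iff _ _ _) (or_intror H)).
    by rewrite /fr ltnn.
Qed.

Lemma fresh_perm v R (G G' : list (lform m)) :
  Permutation G G' -> fresh v R G -> fresh v R G'.
Proof.
  move=> HP [h1 h2]; split => // H; apply h2.
  have [f [hf hl]] := proj1 (labels_G_iff _ _) H.
  apply labels_G_iff; exists f; split => //.
  exact: Permutation_in (Permutation_sym HP) hf.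
Qed.

Definition step_form (a : nat) (f : lform m) (S : state) : state :=
  let R := S.1 in let G := S.2 in
  match f with LF w phi =>
  match phi with
  | And b c => if excluded_middle_informative (derivable n R (cat G [:: LF w b]))
               then (R, cat G [:: LF w c]) else (R, cat G [:: LF w b])
  | Or b c => (R, cat G [:: LF w b; LF w c])
  | Box b => (R, cat G [:: LF (fr R G) b])
  | Dia b => (R, cat G [:: LF a b])
  | Stit i b => (RA i w (fr R G) :: R, cat G [:: LF (fr R G) b])
  | DStit i b => if excluded_middle_informative (pr_cond R i w a)
                 then (R, cat G [:: LF a b]) else (R, G)
  | _ => (R, G)
  end end.

Definition le (S T : state) :=
  (forall r, In r S.1 -> In r T.1) /\ exists X, T.2 = cat S.2 X.

Lemma le_refl S : le S S.
Proof. split => //; exists nil; by rewrite cats0. Qed.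

Lemma le_trans S T U : le S T -> le T U -> le S U.
Proof.
  move=> [h1 [X E1]] [h2 [Y E2]]; split; first auto.
  exists (cat X Y); by rewrite E2 E1 catA.
Qed.

Lemma le_G S T f : le S T -> In f S.2 -> In f T.2.
Proof. move=> [_ [X ->]] H; apply in_cat_iff; auto. Qed.

Lemma le_nth S T j f : le S T -> nth_error S.2 j = Some f -> nth_error T.2 j = Some f.
Proof. move=> [_ [X ->]]; apply nth_error_cat. Qed.

Lemma le_addG (R : list (ratom m)) G X : le (R, G) (R, cat G X).
Proof. split => //; by exists X. Qed.

Lemma step_le a f S : le S (step_form a f S).
Proof.
  case: S => R G; case: f => w phi; case: phi => [p|p|b c|b c|b|b|i b|i b] /=;
    try apply le_addG; try apply le_refl.
  - case: excluded_middle_informative => ? /=; apply le_addG.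
  - split => /=; [by move=> r; right | by eexists].
  - case: excluded_middle_informative => ? /=; [apply le_addG | apply le_refl].
Qed.

Lemma step_ok a f S : In f S.2 -> ~ derivable n S.1 S.2 ->
  ~ derivable n (step_form a f S).1 (step_form a f S).2.
Proof.
  case: S => R G /= Hin ND.
  have [G0 [HG HX]] := perm_front Hin.
  have back : forall G', derivable n R G' -> Permutation G' G -> False.
    move=> G' D P; apply ND; exact: d_perm D (Permutation_refl _) P.
  move: HG HX Hin back; case: f => w phi; case: phi => //= [b c|b c|b|b|i b|i b] HG HX Hin back.
  - case: excluded_middle_informative => D /= D2; last by apply D.
    apply: (back _ _ (Permutation_sym HG)).
    apply d_and.
    + exact: d_perm D (Permutation_refl _) (HX _).
    + exact: d_perm D2 (Permutation_refl _) (HX _).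
  - move=> D; apply: (back _ _ (Permutation_sym HG)).
    apply d_or. exact: d_perm D (Permutation_refl _) (HX _).
  - move=> D; apply: (back _ _ (Permutation_sym HG)).
    apply: (d_box (v := fr R G)); first exact: fresh_perm HG (@fr_fresh R G).
    exact: d_perm D (Permutation_refl _) (HX _).
  - move=> D; apply: (back _ _ (Permutation_sym HG)).
    apply: d_dia. exact: d_perm D (Permutation_refl _) (HX _).
  - move=> D; apply: (back _ _ (Permutation_sym HG)).
    apply: (d_stit (v := fr R G)); first exact: fresh_perm HG (@fr_fresh R G).
    exact: d_perm D (Permutation_refl _) (HX _).
  - case: excluded_middle_informative => HP D /=; last by apply ND.
    apply: (back _ _ (Permutation_sym HG)).
    eapply d_pr; first exact HP. exact: d_perm D (Permutation_refl _) (HX _).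
Qed.

Definition ioa (s : seq nat) (S : state) : state :=
  ([seq RA i (nth 0 s i) (fr S.1 S.2) | i <- enum 'I_m] ++ S.1, S.2).

Lemma ioa_le s S : le S (ioa s S).
Proof.
  split; last by exists nil; rewrite cats0.
  move=> r H /=; apply in_cat_iff; auto.
Qed.

Lemma ioa_ok s S : ~ derivable n S.1 S.2 -> ~ derivable n (ioa s S).1 (ioa s S).2.
Proof.
  move=> ND D; apply ND.
  exact: (d_ioa (us := fun i => nth 0 s i) (v := fr S.1 S.2) (@fr_fresh _ _) D).
Qed.

Definition apc_prop (i : 'I_m) (s : seq nat) (R : list (ratom m)) (G : list (lform m))
  (p : nat * nat) :=
  p.1 <= n - 1 /\ p.1 + 1 <= p.2 /\ p.2 <= n /\
  ~ derivable n (RA i (nth 0 s p.1) (nth 0 s p.2) :: R) G.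

Definition apc (a : nat) (s : seq nat) (S : state) : state :=
  match (insub a : option 'I_m) with
  | Some i =>
      if 0 < n then
        let p := epsilon (inhabits (0, 0)) (apc_prop i s S.1 S.2) in
        (RA i (nth 0 s p.1) (nth 0 s p.2) :: S.1, S.2)
      else S
  | None => S
  end.

Lemma apc_exists i s S : 0 < n -> ~ derivable n S.1 S.2 ->
  exists p, apc_prop i s S.1 S.2 p.
Proof.
  move=> Hn ND; apply NNPP => Hne; apply ND.
  apply: (d_apc (i := i) (ws := fun k => nth 0 s k)) => // k j h1 h2 h3.
  apply NNPP => D; apply Hne; exists (k, j); rewrite /apc_prop /=; auto.
Qed.

Lemma apc_le a s S : le S (apc a s S).
Proof.
  rewrite /apc; case: (insub a) => [i|]; last by apply le_refl.
  case: (0 < n); last by apply le_refl.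
  split; last by exists nil; rewrite cats0.
  move=> r H /=; by right.
Qed.

Lemma apc_ok a s S : ~ derivable n S.1 S.2 -> ~ derivable n (apc a s S).1 (apc a s S).2.
Proof.
  rewrite /apc => ND; case: (insub a) => [i|] //.
  case Hn: (0 < n) => //=.
  have [_ [_ [_ H]]] := epsilon_spec (inhabits (0, 0)) _ (apc_exists i s Hn ND).
  exact H.
Qed.

Definition task := (nat * nat * seq nat)%type.

Definition proc (t : task) (S : state) : state :=
  let: (j, a, s) := t in
  let S1 := match nth_error S.2 j with Some f => step_form a f S | None => S end in
  apc a s (ioa s S1).

Lemma proc_le t S : le S (proc t S).
Proof.
  case: t => [[j a] s] /=.
  apply: le_trans; last apply: le_trans; [| apply ioa_le | apply apc_le].
  case: nth_error => [f|]; [apply step_le | apply le_refl].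
Qed.

Lemma proc_ok t S : ~ derivable n S.1 S.2 -> ~ derivable n (proc t S).1 (proc t S).2.
Proof.
  case: t => [[j a] s] /= ND.
  apply apc_ok, ioa_ok.
  case E: nth_error => [f|] //.
  apply step_ok => //. exact: nth_error_In E.
Qed.

Definition tsk (c : nat) : task := odflt (0, 0, [::]) (unpickle c).

Lemma tskK t : tsk (pickle t) = t.
Proof. by rewrite /tsk pickleK. Qed.

Definition fstep (S : state) (c : nat) := proc (tsk c) S.

Lemma fold_props l S : ~ derivable n S.1 S.2 ->
  le S (fold_left fstep l S) /\ ~ derivable n (fold_left fstep l S).1 (fold_left fstep l S).2 /\
  forall c, In c l -> exists T, le S T /\ ~ derivable n T.1 T.2 /\
     le (proc (tsk c) T) (fold_left fstep l S).
Proof.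
  elim: l S => [|c' l IH] S ND /=.
  - split; [apply le_refl | split => //].
  - have ND' := @proc_ok (tsk c') S ND.
    have [h1 [h2 h3]] := IH _ ND'.
    split; first exact: le_trans (@proc_le _ _) h1.
    split => // c [<-|Hc].
    + exists S; split; [apply le_refl | split => //].
    + have [T [t1 [t2 t3]]] := h3 c Hc.
      exists T; split => //; exact: le_trans (@proc_le _ _) t1.
Qed.

Variable S0 : state.
Hypothesis ND0 : ~ derivable n S0.1 S0.2.

Fixpoint stage (k : nat) : state :=
  match k with
  | 0 => S0
  | k.+1 => fold_left fstep (iota 0 k.+1) (stage k)
  end.

Lemma stage_ok k : ~ derivable n (stage k).1 (stage k).2.
Proof.
  elim: k => [|k IH] //. exact: (proj1 (proj2 (@fold_props (iota 0 k.+1) _ IH))).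
Qed.

Lemma stage_step k : le (stage k) (stage k.+1).
Proof. exact (proj1 (@fold_props (iota 0 k.+1) _ (@stage_ok k))). Qed.

Lemma stage_le k k' : k <= k' -> le (stage k) (stage k').
Proof.
  move=> /subnK <-. elim: (k' - k) => [|d IH] /=; first by apply le_refl.
  exact: le_trans IH (stage_step _).
Qed.

Lemma fair t K : exists T k', le (stage K) T /\ ~ derivable n T.1 T.2 /\
  le (proc t T) (stage k').
Proof.
  pose c := pickle t. pose k := maxn K c.
  have [_ [_ h3]] := @fold_props (iota 0 k.+1) _ (@stage_ok k).
  have [T [t1 [t2 t3]]] := h3 c (@In_iota k.+1 0 c (leq0n _) (leq_maxr K c)).
  exists T, k.+1; split; first exact: le_trans (stage_le (leq_maxl K c)) t1.
  split => //. by rewrite /c tskK in t3.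
Qed.

Definition Rinf r := exists k, In r (stage k).1.
Definition Ginf f := exists k, In f (stage k).2.

Lemma Ginf_le S k f : le S (stage k) -> In f S.2 -> Ginf f.
Proof. move=> H1 H2; exists k; exact: le_G H1 H2. Qed.

Lemma Rinf_le S k r : le S (stage k) -> In r S.1 -> Rinf r.
Proof. move=> [H1 _] H2; exists k; auto. Qed.

Lemma form_task w phi a : Ginf (LF w phi) -> forall K, exists T k',
  le (stage K) T /\ le (step_form a (LF w phi) T) (stage k').
Proof.
  move=> [k0 Hk0] K.
  have [j Hj] := In_nth_error _ _ Hk0.
  have [T [k' [t1 [t2 t3]]]] := fair (j, a, [::]) (maxn K k0).
  exists T, k'; split; first exact: le_trans (stage_le (leq_maxl K k0)) t1.
  have HT : nth_error T.2 j = Some (LF w phi).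
    apply: le_nth Hj. exact: le_trans (stage_le (leq_maxr K k0)) t1.
  move: t3; rewrite /proc HT => t3.
  apply: le_trans t3. apply: le_trans; [apply ioa_le | apply apc_le].
Qed.

Definition edgeinf (i : 'I_m) x y := Rinf (RA i x y) \/ Rinf (RA i y x).

Definition Fm : frame m := @Frame m nat (fun i x y => clos_refl_trans label (edgeinf i) x y).

Definition Vm : var -> world Fm -> Prop := fun p w => Ginf (LF w (NAtom p)).

Lemma pr_mono (R R' : list (ratom m)) i x y :
  (forall r, In r R -> In r R') -> pr_cond R i x y -> pr_cond R' i x y.
Proof.
  move=> H; elim => [a b [h|h]| a | a b c _ h1 _ h2].
  - apply rt_step; left; auto.
  - apply rt_step; right; auto.
  - apply rt_refl.
  - exact: rt_trans h1 h2.
Qed.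

Lemma acc_stage i x y : clos_refl_trans label (edgeinf i) x y ->
  exists K, pr_cond (stage K).1 i x y.
Proof.
  elim => [a b [[k h]|[k h]] | a | a b c _ [k1 h1] _ [k2 h2]].
  - exists k; apply rt_step; left; auto.
  - exists k; apply rt_step; right; auto.
  - exists 0; apply rt_refl.
  - exists (maxn k1 k2); apply: rt_trans.
    + apply: pr_mono h1; exact: (proj1 (stage_le (leq_maxl k1 k2))).
    + apply: pr_mono h2; exact: (proj1 (stage_le (leq_maxr k1 k2))).
Qed.

Lemma Ginf_common f g : Ginf f -> Ginf g -> exists k, In f (stage k).2 /\ In g (stage k).2.
Proof.
  move=> [k1 h1] [k2 h2]; exists (maxn k1 k2); split.
  - exact: le_G (stage_le (leq_maxl _ _)) h1.
  - exact: le_G (stage_le (leq_maxr _ _)) h2.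
Qed.

Lemma in_last (f : lform m) G X : In f X -> In f (cat G X).
Proof. move=> H; apply in_cat_iff; auto. Qed.

Lemma truth phi : forall w, Ginf (LF w phi) -> ~ sat Vm w phi.
Proof.
  elim: phi => [p|p|b IHb c IHc|b IHb c IHc|b IHb|b IHb|i b IHb|i b IHb] w Hw /=.
  - move=> HV.
    have [k [h1 h2]] := Ginf_common Hw HV.
    apply (@stage_ok k).
    have [G0 [HG _]] := perm_front h1.
    have h3 : In (LF w (NAtom p)) G0.
      case: (Permutation_in _ HG h2) => // E; discriminate E.
    have [G1 [HG1 _]] := perm_front h3.
    apply: (d_perm (d_id n (stage k).1 G1 w p) (Permutation_refl _)).
    apply: perm_trans (Permutation_sym HG).
    apply perm_skip, Permutation_sym, HG1.
  - by apply.
  - have [T [k' [_ t2]]] := @form_task _ _ 0 Hw 0.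
    move: t2; rewrite /step_form /=.
    case: excluded_middle_informative => ? t2 [s1 s2].
    + apply: (IHc w _ s2). apply: Ginf_le t2 _; apply in_last; left; done.
    + apply: (IHb w _ s1). apply: Ginf_le t2 _; apply in_last; left; done.
  - have [T [k' [_ t2]]] := @form_task _ _ 0 Hw 0.
    move: t2; rewrite /step_form /= => t2 [s|s].
    + apply: (IHb w _ s). apply: Ginf_le t2 _; apply in_last; left; done.
    + apply: (IHc w _ s). apply: Ginf_le t2 _; apply in_last; right; left; done.
  - have [T [k' [_ t2]]] := @form_task _ _ 0 Hw 0.
    move: t2; rewrite /step_form /= => t2 s.
    apply: (IHb _ _ (s (fr T.1 T.2))). apply: Ginf_le t2 _; apply in_last; left; done.
  - move=> [u s].
    have [T [k' [_ t2]]] := @form_task _ _ u Hw 0.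
    move: t2; rewrite /step_form /= => t2.
    apply: (IHb _ _ s). apply: Ginf_le t2 _; apply in_last; left; done.
  - have [T [k' [_ t2]]] := @form_task _ _ 0 Hw 0.
    move: t2; rewrite /step_form /= => t2 s.
    apply: (IHb _ _ (s (fr T.1 T.2) _)).
    + apply: Ginf_le t2 _; apply in_last; left; done.
    + apply rt_step; left; apply: Rinf_le t2 _; by left.
  - move=> [u [hacc s]].
    have [K HK] := acc_stage hacc.
    have [T [k' [t1 t2]]] := @form_task _ _ u Hw K.
    move: t2; rewrite /step_form /=.
    case: excluded_middle_informative => HP t2.
    + apply: (IHb _ _ s). apply: Ginf_le t2 _; apply in_last; left; done.
    + exfalso; apply HP; apply: pr_mono HK; exact: (proj1 t1).
Qed.

Lemma frame_ok : is_ldm_frame n Fm.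
Proof.
  split; [|split].
  - move=> i; constructor.
    + move=> x; apply rt_refl.
    + move=> x y z h1 h2; exact: rt_trans h1 h2.
    + move=> x y; elim => [a b [h|h]| a | a b c _ h1 _ h2].
      * apply rt_step; by right.
      * apply rt_step; by left.
      * apply rt_refl.
      * exact: rt_trans h2 h1.
  - move=> u.
    pose s := map u (enum 'I_m).
    have [T [k' [_ [_ t3]]]] := fair (0, 0, s) 0.
    set S1 := (match nth_error T.2 0 with Some f => step_form 0 f T | None => T end) in t3.
    have t4 : le (ioa s S1) (stage k') by apply: le_trans t3; apply apc_le.
    exists (fr S1.1 S1.2) => i.
    apply rt_step; left. apply: Rinf_le t4 _.
    rewrite /ioa /=. apply in_cat_iff; left.
    have E : nth 0 s i = u i.
      by rewrite /s (nth_map i) ?size_enum_ord ?nth_ord_enum.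
    rewrite -E.
    apply: (in_map_seq (fun i0 : 'I_m => RA i0 (nth 0 s i0) (fr S1.1 S1.2))).
    apply in_seq_In; exact: mem_enum.
  - move=> Hn i ws.
    pose s := map ws (iota 0 n.+1).
    have [T [k' [_ [NT t3]]]] := fair (0, nat_of_ord i, s) 0.
    rewrite /proc in t3.
    set S1 := (match nth_error T.2 0 with Some f => step_form i f T | None => T end) in t3.
    have NS1 : ~ derivable n (ioa s S1).1 (ioa s S1).2.
      apply ioa_ok. rewrite /S1; case E: nth_error => [f|] //.
      apply step_ok => //; exact: nth_error_In E.
    move: t3; rewrite /apc valK Hn; cbv beta iota zeta.
    set p := epsilon _ _ => t3.
    have [h1 [h2 [h3 _]]] : apc_prop i s (ioa s S1).1 (ioa s S1).2 p
      := epsilon_spec _ _ (@apc_exists i s _ Hn NS1).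
    exists p.1, p.2; split; first lia. split => //.
    have Es : forall q, q <= n -> nth 0 s q = ws q.
      move=> q hq; rewrite /s (nth_map 0) ?size_iota ?nth_iota //.
    have e1 := Es p.1 ltac:(lia).
    have e2 := Es p.2 h3.
    apply rt_step; left. apply: (Rinf_le t3). rewrite /= e1 e2. by left.
Qed.

End Completeness.

Theorem theorem3 (m n : nat) (hm : 1 <= m) (phi : form m) (x : label) :
  valid n phi -> derivable n nil (LF x phi :: nil).
Proof.
  move=> Hv. apply NNPP => ND.
  pose S0 : state m := (nil, [:: LF x phi]).
  have ND0 : ~ derivable n S0.1 S0.2 by [].
  have HT := truth ND0 (phi := phi) (w := x).
  apply: HT; first by exists 0; left.
  apply: Hv. exact: frame_ok ND0.
Qed.
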